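(* Let $\nu\in\mathcal{S}^{n-1}$, $\Pi_\nu(0):=\{x:-1\le x\cdot\nu\le0\}$, $\Gamma_N:=\{x\cdot\nu=0\}$, $\Gamma_D:=\{x\cdot\nu=-1\}$, and for $x\in\mathbb{R}^n$ write $x'=x-(x\cdot\nu)\nu$. Let $R,\varepsilon>0$ and $\Sigma_R:=\Pi_\nu(0)\cap\{|x'|\le R\}$. Suppose $\omega$ satisfies in the viscosity sense: (a) $-\mathcal{P}^+(D^2\omega)\le0$ and $-\mathcal{P}^-(D^2\omega)\ge0$ in $\Sigma_R$; (b) $\partial\omega/\partial\nu=0$ on $\Gamma_N\cap\Sigma_R$; (c) $\omega=0$ on $\Gamma_D\cap\Sigma_R$; (d) $|\omega|\le R^{2-\varepsilon}$. Then $|\omega|\le CR^{-\varepsilon}$ in $\Pi_\nu(0)\cap\{|x'|\le1\}$, where $C>0$ is a constant depending only on $n,\lambda,\Lambda$.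
   Context: Fix $0<\lambda<\Lambda$. For a real symmetric matrix $M$ with eigenvalues $e_i$, $\mathcal{P}^+(M)=\Lambda\sum_{e_i>0}e_i+\lambda\sum_{e_i<0}e_i$ and $\mathcal{P}^-(M)=\lambda\sum_{e_i>0}e_i+\Lambda\sum_{e_i<0}e_i$ (Pucci extremal operators). *)

(* Defs.v *)
From HB Require Import structures.
From mathcomp Require Import all_boot all_order all_algebra.
From mathcomp Require Import all_classical all_reals all_analysis.
Set Implicit Arguments. Unset Strict Implicit. Unset Printing Implicit Defensive.
Import Order.TTheory GRing.Theory Num.Theory.
Import numFieldNormedType.Exports.
Local Open Scope classical_set_scope.
Local Open Scope ring_scope.

Section Defs.
Variables (R : realType) (n : nat).

Definition dotv (x y : 'rV[R]_n) : R := \sum_(i < n) x 0 i * y 0 i.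
Definition enorm (x : 'rV[R]_n) : R := Num.sqrt (dotv x x).

Definition tang (nu x : 'rV[R]_n) : 'rV[R]_n := x - (dotv x nu) *: nu.

Definition slab (nu : 'rV[R]_n) : set 'rV[R]_n :=
  [set x | -1 <= dotv x nu <= 0].

Definition SigmaR (nu : 'rV[R]_n) (Rr : R) : set 'rV[R]_n :=
  [set x | slab nu x /\ enorm (tang nu x) <= Rr].

(* eigenvalues (with multiplicity) of a square matrix: a list s with
   char_poly M = prod_(e <- s) (X - e), when it exists (always for real
   symmetric M); the Pucci operators are invariant under reordering of s. *)
Definition eigs (M : 'M[R]_n) : seq R :=
  match pselect (exists s : seq R, char_poly M = \prod_(e <- s) ('X - e%:P)) with
  | left h => projT1 (cid h)
  | right _ => [::]
  end.

Definition pucci_plus (lam Lam : R) (M : 'M[R]_n) : R :=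
  Lam * (\sum_(e <- eigs M | 0 < e) e) + lam * (\sum_(e <- eigs M | e < 0) e).
Definition pucci_minus (lam Lam : R) (M : 'M[R]_n) : R :=
  lam * (\sum_(e <- eigs M | 0 < e) e) + Lam * (\sum_(e <- eigs M | e < 0) e).

Definition evec (i : 'I_n) : 'rV[R]_n := delta_mx 0 i.

Definition dirder (f : 'rV[R]_n -> R) (v x : 'rV[R]_n) : R :=
  derive1 (fun t : R => f (x + t *: v)) 0.

Definition pderiv (i : 'I_n) (f : 'rV[R]_n -> R) : 'rV[R]_n -> R :=
  fun x => dirder f (evec i) x.

Definition C2 (f : 'rV[R]_n -> R) : Prop :=
  continuous f /\
  (forall i x, derivable (fun t : R => f (x + t *: evec i)) 0 1) /\
  (forall i, continuous (pderiv i f)) /\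
  (forall i j x, derivable (fun t : R => pderiv j f (x + t *: evec i)) 0 1) /\
  (forall i j, continuous (pderiv i (pderiv j f))).

Definition hessian (f : 'rV[R]_n -> R) (x : 'rV[R]_n) : 'M[R]_n :=
  \matrix_(i, j) pderiv i (pderiv j f) x.

Definition touch_above (D : set 'rV[R]_n) (u phi : 'rV[R]_n -> R) x0 : Prop :=
  exists2 r : R, 0 < r & forall y, D y -> enorm (y - x0) < r ->
    u y - phi y <= u x0 - phi x0.
Definition touch_below (D : set 'rV[R]_n) (u phi : 'rV[R]_n -> R) x0 : Prop :=
  exists2 r : R, 0 < r & forall y, D y -> enorm (y - x0) < r ->
    u y - phi y >= u x0 - phi x0.

Definition interiorSigma (nu : 'rV[R]_n) (Rr : R) (x : 'rV[R]_n) : Prop :=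
  -1 < dotv x nu < 0 /\ enorm (tang nu x) < Rr.
Definition neumannPart (nu : 'rV[R]_n) (Rr : R) (x : 'rV[R]_n) : Prop :=
  dotv x nu = 0 /\ enorm (tang nu x) < Rr.

(* (a)+(b): viscosity subsolution of -P^+(D^2 w) = 0 in Sigma_R with
   d w / d nu = 0 on Gamma_N (generalized boundary condition) *)
Definition visc_sub_Pplus (lam Lam : R) (nu : 'rV[R]_n) (Rr : R)
    (w : 'rV[R]_n -> R) : Prop :=
  forall (phi : 'rV[R]_n -> R) (x0 : 'rV[R]_n), C2 phi ->
    touch_above (SigmaR nu Rr) w phi x0 ->
    (interiorSigma nu Rr x0 -> - pucci_plus lam Lam (hessian phi x0) <= 0) /\
    (neumannPart nu Rr x0 ->
       Num.min (- pucci_plus lam Lam (hessian phi x0)) (dirder phi nu x0) <= 0).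

(* (a)+(b): viscosity supersolution of -P^-(D^2 w) = 0 in Sigma_R with
   d w / d nu = 0 on Gamma_N *)
Definition visc_super_Pminus (lam Lam : R) (nu : 'rV[R]_n) (Rr : R)
    (w : 'rV[R]_n -> R) : Prop :=
  forall (phi : 'rV[R]_n -> R) (x0 : 'rV[R]_n), C2 phi ->
    touch_below (SigmaR nu Rr) w phi x0 ->
    (interiorSigma nu Rr x0 -> - pucci_minus lam Lam (hessian phi x0) >= 0) /\
    (neumannPart nu Rr x0 ->
       Num.max (- pucci_minus lam Lam (hessian phi x0)) (dirder phi nu x0) >= 0).

End Defs.

(* Main.v *)
Require Import Defs.
From HB Require Import structures.
From mathcomp Require Import all_boot all_order all_algebra.
From mathcomp Require Import all_classical all_reals all_analysis.
From mathcomp Require Import ring lra.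
Import Order.TTheory GRing.Theory Num.Theory.
Import numFieldNormedType.Exports.
Local Open Scope classical_set_scope.
Local Open Scope ring_scope.

Lemma polyder (R : realType) (p q r : R) :
  derivable (fun s : R => p + q * s + r * s ^+ 2) 0 1 /\
  derive1 (fun s : R => p + q * s + r * s ^+ 2) 0 = q.
Proof.
have H : is_derive (0:R) (1:R) (fun s : R => p + q * s + r * s ^+ 2) q.
  apply: is_derive_eq.
  rewrite /= !scale0r addr0 scaler0 addr0 add0r mul1r.
  by rewrite /GRing.scale /= mulr1.
split; first by case: H.
by rewrite derive1E; apply: derive_val.
Qed.

Section Cont.
Variables (R : realType) (n : nat).
Lemma contD' (f g : 'rV[R]_n -> R) : continuous f -> continuous g -> continuous (fun x => f x + g x).
Proof. by move=> cf cg x; apply: continuousD; [exact: cf | exact: cg]. Qed.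
Lemma contM' (f g : 'rV[R]_n -> R) : continuous f -> continuous g -> continuous (fun x => f x * g x).
Proof. by move=> cf cg x; apply: continuousM; [exact: cf | exact: cg]. Qed.
Lemma contC' (c : R) : continuous (fun _ : 'rV[R]_n => c).
Proof. by move=> x; apply: cst_continuous. Qed.
Lemma contX2' (f : 'rV[R]_n -> R) : continuous f -> continuous (fun x => f x ^+ 2).
Proof.
move=> cf; have -> : (fun x => f x ^+ 2) = (fun x => f x * f x).
  by apply: funext => x; rewrite expr2.
exact: contM'.
Qed.
End Cont.

Section S.
Variables (R : realType) (n : nat).
Implicit Types (x y z nu : 'rV[R]_n).

Lemma dotvDl x y z : dotv (x + y) z = dotv x z + dotv y z.
Proof. by rewrite /dotv -big_split; apply: eq_bigr => i _; rewrite mxE mulrDl. Qed.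
Lemma dotvZl (c : R) x z : dotv (c *: x) z = c * dotv x z.
Proof. by rewrite /dotv mulr_sumr; apply: eq_bigr => i _; rewrite mxE mulrA. Qed.
Lemma dotvC x y : dotv x y = dotv y x.
Proof. by rewrite /dotv; apply: eq_bigr => i _; rewrite mulrC. Qed.
Lemma dotvDr x y z : dotv z (x + y) = dotv z x + dotv z y.
Proof. by rewrite dotvC dotvDl !(dotvC z). Qed.
Lemma dotvZr (c : R) x z : dotv z (c *: x) = c * dotv z x.
Proof. by rewrite dotvC dotvZl (dotvC z). Qed.
Lemma dotvNl x z : dotv (- x) z = - dotv x z.
Proof. by rewrite -scaleN1r dotvZl mulN1r. Qed.
Lemma dotvBl x y z : dotv (x - y) z = dotv x z - dotv y z.
Proof. by rewrite dotvDl dotvNl. Qed.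
Lemma dotv_ge0 x : 0 <= dotv x x.
Proof. by apply: sumr_ge0 => i _; rewrite -expr2 sqr_ge0. Qed.
Lemma dotv_evec (i : 'I_n) x : dotv (evec R i) x = x 0 i.
Proof.
rewrite /dotv (bigD1 i) //= big1 ?addr0.
  by rewrite /evec mxE !eqxx mul1r.
by move=> j ji; rewrite /evec mxE (negbTE ji) andbF mul0r.
Qed.
Lemma dotv_mx x : x *m x^T = (dotv x x)%:M.
Proof.
apply/matrixP => i j; rewrite !mxE !ord1 eqxx mulr1n.
by apply: eq_bigr => k _; rewrite mxE.
Qed.

Lemma dotv_cont y : continuous (fun x : 'rV[R]_n => dotv x y).
Proof.
rewrite /dotv.
elim: (index_enum _) => [|i r IH].
  have -> : (fun x : 'rV[R]_n => \sum_(i <- [::]) x 0 i * y 0 i) = (fun=> 0).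
    by apply: funext => x; rewrite big_nil.
  exact: cst_continuous.
have -> : (fun x : 'rV[R]_n => \sum_(j <- i :: r) x 0 j * y 0 j) =
   (fun x => x 0 i * y 0 i) + (fun x => \sum_(j <- r) x 0 j * y 0 j).
  by apply: funext => x; rewrite big_cons.
move=> x; apply: continuousD; last exact: IH.
apply: continuousM; first exact: coord_continuous.
exact: cst_continuous.
Qed.

Lemma dotvv_cont : continuous (fun x : 'rV[R]_n => dotv x x).
Proof.
rewrite /dotv.
elim: (index_enum _) => [|i r IH].
  have -> : (fun x : 'rV[R]_n => \sum_(i <- [::]) x 0 i * x 0 i) = (fun=> 0).
    by apply: funext => x; rewrite big_nil.
  exact: contC'.
have -> : (fun x : 'rV[R]_n => \sum_(j <- i :: r) x 0 j * x 0 j) =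
   (fun x => x 0 i * x 0 i + \sum_(j <- r) x 0 j * x 0 j).
  by apply: funext => x; rewrite big_cons.
apply: contD'; last exact: IH.
by apply: contM'; exact: coord_continuous.
Qed.

Variables (nu : 'rV[R]_n) (al be ga de : R).

Definition Q x := al * dotv x x + be * dotv x nu ^+ 2 + ga * dotv x nu + de.
Definition Dq x v := 2 * al * dotv x v + 2 * be * dotv x nu * dotv v nu + ga * dotv v nu.

Lemma Q_shift x v : (fun s : R => Q (x + s *: v)) =
  (fun s => Q x + Dq x v * s + (al * dotv v v + be * dotv v nu ^+ 2) * s ^+ 2).
Proof.
apply: funext => s; rewrite /Q /Dq !dotvDl !dotvDr !dotvZl !dotvZr (dotvC v x).
ring.
Qed.

Lemma Q_der x v : derivable (fun s : R => Q (x + s *: v)) 0 1 /\ dirder Q v x = Dq x v.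
Proof. by rewrite /dirder Q_shift; exact: polyder. Qed.

Lemma Dq_shift w v x : (fun s : R => Dq (x + s *: w) v) =
  (fun s => Dq x v + (2 * al * dotv w v + 2 * be * dotv w nu * dotv v nu) * s + 0 * s ^+ 2).
Proof.
apply: funext => s; rewrite /Dq !dotvDl !dotvZl; ring.
Qed.

Lemma pderivQ i : pderiv i Q = fun x => Dq x (evec R i).
Proof. by apply: funext => x; rewrite /pderiv (proj2 (Q_der _ _)). Qed.

Lemma Dq_cont v : continuous (fun x => Dq x v).
Proof.
rewrite /Dq; apply: contD'; last exact: contC'.
apply: contD'; first by apply: contM'; [exact: contC' | exact: dotv_cont].
apply: contM'; last exact: contC'.
apply: contM'; [exact: contC' | exact: dotv_cont].
Qed.

Lemma pderiv2Q i j x :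
  pderiv i (pderiv j Q) x = 2 * al * (i == j)%:R + 2 * be * nu 0 i * nu 0 j.
Proof.
rewrite pderivQ /pderiv /dirder Dq_shift (proj2 (polyder _ _ _ _)).
by rewrite !dotv_evec /evec mxE eqxx /= eq_sym.
Qed.

Lemma C2Q : C2 Q.
Proof.
split.
  rewrite /Q; apply: contD'; last exact: contC'.
  apply: contD'; last by apply: contM'; [exact: contC' | exact: dotv_cont].
  apply: contD'; first by apply: contM'; [exact: contC' | exact: dotvv_cont].
  apply: contM'; first exact: contC'.
  by apply: contX2'; exact: dotv_cont.
split; first by move=> i x; exact: (proj1 (Q_der _ _)).
split; first by move=> i; rewrite pderivQ; exact: Dq_cont.
split.
  move=> i j x; rewrite pderivQ Dq_shift; exact: (proj1 (polyder _ _ _ _)).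
move=> i j.
have -> : pderiv i (pderiv j Q) = fun=> 2 * al * (i == j)%:R + 2 * be * nu 0 i * nu 0 j.
  by apply: funext => x; rewrite pderiv2Q.
exact: contC'.
Qed.

Lemma hessQ x : hessian Q x = (2 * al)%:M + (2 * be) *: (nu^T *m nu).
Proof.
apply/matrixP => i j; rewrite !mxE pderiv2Q big_ord1 !mxE.
by rewrite mulrnAr mulrA mulr1.
Qed.

End S.

Lemma charpoly_rank1 (F : fieldType) (n : nat) (u : 'rV[F]_n) (a b : F) :
  (0 < n)%N -> u *m u^T = 1 ->
  char_poly (a%:M + b *: (u^T *m u)) = ('X - (a + b)%:P) * ('X - a%:P) ^+ n.-1.
Proof.
move=> n0 uu.
set P : {poly F} := 'X - a%:P.
set v : 'rV[{poly F}]_n := map_mx polyC u.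
set be : {poly F} := b%:P.
have vv : v *m v^T = 1.
  have -> : v^T = map_mx polyC u^T by apply/matrixP => i j; rewrite !mxE.
  by rewrite /v -map_mxM uu map_mx1.
have E : char_poly_mx (a%:M + b *: (u^T *m u)) = P%:M - be *: (v^T *m v).
  apply/matrixP => i j; rewrite !mxE big_ord1 !mxE big_ord1 !mxE.
  rewrite /P /be; case: (i == j); rewrite /= ?mulr1n ?mulr0n; 
  rewrite ?rmorphD ?rmorphM /=; ring.
pose L := block_mx (P%:M : 'M[{poly F}]_1) (-v) (0 : 'cV[{poly F}]_n) (1%:M : 'M[{poly F}]_n).
pose K := block_mx (1%:M : 'M[{poly F}]_1) v (be *: v^T) (P%:M : 'M[{poly F}]_n).
pose K' := block_mx (1%:M : 'M[{poly F}]_1) (0 : 'rV[{poly F}]_n) (-(be *: v^T)) (1%:M : 'M[{poly F}]_n).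
have LK : L *m K = block_mx ((P - be)%:M) 0 (be *: v^T) (P%:M).
  rewrite /L /K mulmx_block.
  rewrite !mul_scalar_mx !mul_mx_scalar.
  congr block_mx.
  - by rewrite mulNmx -scalemxAr vv !scalemx1 -raddfB.
  - by rewrite scalerN subrr.
  - by rewrite scaler0 scale1r add0r.
  - by rewrite mul0mx add0r scale1r.
have K'K : K' *m K = block_mx 1%:M v 0 (P%:M - be *: (v^T *m v)).
  rewrite /K' /K mulmx_block.
  rewrite !mul_scalar_mx !mul_mx_scalar.
  congr block_mx.
  - by rewrite mul0mx addr0 scale1r.
  - by rewrite scaler0 addr0 scale1r.
  - by rewrite !scale1r addNr.
  - by rewrite scale1r mulNmx -scalemxAl addrC.
have dK : \det K = char_poly (a%:M + b *: (u^T *m u)).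
  have := congr1 determinant K'K.
  rewrite det_mulmx det_lblock !det1 mul1r det_ublock det1 mul1r => ->.
  by rewrite /char_poly E mul1r.
have := congr1 determinant LK.
rewrite det_mulmx det_ublock det_lblock det1 mulr1 !det_scalar1 det_scalar dK.
move=> H.
have P0 : P != 0 by rewrite /P polyXsubC_eq0.
apply: (mulIf P0).
have -> : 'X - (a + b)%:P = P - be by rewrite /P /be rmorphD /=; ring.
rewrite -mulrA -exprSr prednK //.
by rewrite mulrC H.
Qed.

Section E.
Variables (R : realType) (n : nat).

Lemma prod_nseq (a : R) k : \prod_(e <- nseq k a) ('X - e%:P) = ('X - a%:P) ^+ k.
Proof. by elim: k => [|k IH]; rewrite ?big_nil ?expr0 // big_cons IH exprS. Qed.

Lemma eigs_spec (M : 'M[R]_n) s : char_poly M = \prod_(e <- s) ('X - e%:P) ->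
  char_poly M = \prod_(e <- eigs M) ('X - e%:P).
Proof.
move=> h; rewrite /eigs; case: pselect => [h'|[]]; last by exists s.
by case: (cid h').
Qed.

Lemma dotv_mx' (x : 'rV[R]_n) : x *m x^T = (dotv x x)%:M.
Proof.
apply/matrixP => i j; rewrite !mxE !ord1 eqxx mulr1n.
by apply: eq_bigr => k _; rewrite mxE.
Qed.

Lemma eigs_rank1 (nu : 'rV[R]_n) (a b : R) : dotv nu nu = 1 ->
  (forall e, e \in eigs (a%:M + b *: (nu^T *m nu)) -> e = a \/ e = a + b) /\
  (a + b) \in eigs (a%:M + b *: (nu^T *m nu)) /\
  size (eigs (a%:M + b *: (nu^T *m nu))) = n.
Proof.
move=> h.
have n0 : (0 < n)%N.
  case: (posnP n) => // n0; move: h; rewrite /dotv.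
  by move: (nu); rewrite n0 => nu'; rewrite big_ord0 => /eqP; rewrite eq_sym oner_eq0.
have nn : nu *m nu^T = 1 by rewrite dotv_mx' h.
have cp := @charpoly_rank1 _ _ nu a b n0 nn.
have cp2 : char_poly (a%:M + b *: (nu^T *m nu)) =
   \prod_(e <- (a + b) :: nseq n.-1 a) ('X - e%:P) by rewrite big_cons prod_nseq.
have cp3 := eigs_spec _ _ cp2.
have memE e : (e \in eigs (a%:M + b *: (nu^T *m nu))) = (e \in (a + b) :: nseq n.-1 a).
  by rewrite -!root_prod_XsubC -cp3 cp2.
split.
  move=> e; rewrite memE inE mem_nseq => /orP[/eqP ->|/andP[_ /eqP ->]]; by [right|left].
split; first by rewrite memE inE eqxx.
have := size_char_poly (a%:M + b *: (nu^T *m nu)).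
by rewrite cp3 size_prod_XsubC => -[].
Qed.

Lemma sum_pos_le (s : seq R) p : 0 <= p -> (forall e, e \in s -> 0 < e -> e <= p) ->
  \sum_(e <- s | 0 < e) e <= p *+ size s.
Proof.
move=> p0; elim: s => [|x s IH] h; first by rewrite big_nil.
rewrite big_cons /= mulrS.
have IH' : \sum_(e <- s | 0 < e) e <= p *+ size s.
  by apply: IH => e es; apply: h; rewrite inE es orbT.
case: ifP => x0.
  by apply: lerD => //; apply: h => //; rewrite inE eqxx.
by rewrite -[X in X <= _]add0r; apply: lerD.
Qed.

Lemma sum_neg_ge (s : seq R) p : p <= 0 -> (forall e, e \in s -> e < 0 -> p <= e) ->
  p *+ size s <= \sum_(e <- s | e < 0) e.
Proof.
move=> p0; elim: s => [|x s IH] h; first by rewrite big_nil.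
rewrite big_cons /= mulrS.
have IH' : p *+ size s <= \sum_(e <- s | e < 0) e.
  by apply: IH => e es; apply: h; rewrite inE es orbT.
case: ifP => x0.
  by apply: lerD => //; apply: h => //; rewrite inE eqxx.
by rewrite -[X in _ <= X]add0r; apply: lerD.
Qed.

Lemma sum_neg_le (s : seq R) q : q \in s -> q < 0 -> \sum_(e <- s | e < 0) e <= q.
Proof.
move=> qs q0; rewrite (big_rem q qs) /= q0.
rewrite -[X in _ <= X]addr0; apply: lerD => //.
by apply: sumr_le0 => e /ltW.
Qed.

Lemma sum_pos_ge (s : seq R) q : q \in s -> 0 < q -> q <= \sum_(e <- s | 0 < e) e.
Proof.
move=> qs q0; rewrite (big_rem q qs) /= q0.
rewrite -[X in X <= _]addr0; apply: lerD => //.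
by apply: sumr_ge0 => e /ltW.
Qed.

Lemma pplus_bound (lam Lam : R) (nu : 'rV[R]_n) (a b : R) :
  dotv nu nu = 1 -> 0 < a -> a + b < 0 -> 0 < lam -> 0 < Lam ->
  pucci_plus lam Lam (a%:M + b *: (nu^T *m nu)) <= Lam * (a *+ n) + lam * (a + b).
Proof.
move=> h a0 ab0 l0 L0; have [E1 [E2 E3]] := eigs_rank1 nu a b h.
rewrite /pucci_plus; apply: lerD.
  rewrite ler_pM2l //.
  have H : forall e, e \in eigs (a%:M + b *: (nu^T *m nu)) -> 0 < e -> e <= a.
    move=> e /E1 [->//|-> e0]; lra.
  by have := sum_pos_le _ _ (ltW a0) H; rewrite E3.
by rewrite ler_pM2l //; apply: sum_neg_le.
Qed.

Lemma pminus_bound (lam Lam : R) (nu : 'rV[R]_n) (a b : R) :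
  dotv nu nu = 1 -> a < 0 -> 0 < a + b -> 0 < lam -> 0 < Lam ->
  lam * (a + b) + Lam * (a *+ n) <= pucci_minus lam Lam (a%:M + b *: (nu^T *m nu)).
Proof.
move=> h a0 ab0 l0 L0; have [E1 [E2 E3]] := eigs_rank1 nu a b h.
rewrite /pucci_minus; apply: lerD.
  by rewrite ler_pM2l //; apply: sum_pos_ge.
rewrite ler_pM2l //.
have H : forall e, e \in eigs (a%:M + b *: (nu^T *m nu)) -> e < 0 -> a <= e.
  move=> e /E1 [->//|-> e0]; lra.
by have := sum_neg_ge _ _ (ltW a0) H; rewrite E3.
Qed.
End E.

Section G.
Variables (R : realType) (n : nat).
Implicit Types (y nu : 'rV[R]_n).

Lemma bnd (A : set 'rV[R]_n) (K : R) : 0 <= K -> (forall y, A y -> forall i, `|y 0 i| <= K) -> bounded_set A.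
Proof.
move=> K0 h.
exists K; split; first by rewrite ger0_real.
move=> N KN y Ay.
rewrite /=; have -> : `|y| = mx_norm y by [].
rewrite mx_normrE.
apply: bigmax_le => [|[i j] _] /=; first by apply: (le_trans K0); apply: ltW.
rewrite ord1; apply: (le_trans (h y Ay j)); exact: ltW.
Qed.

Lemma dotvBr x y z : dotv z (x - y) = dotv z x - dotv z y.
Proof. by rewrite dotvC dotvBl !(dotvC _ _ z). Qed.

Lemma dotv0l y : dotv (0 : 'rV[R]_n) y = 0.
Proof. by rewrite /dotv big1 // => i _; rewrite mxE mul0r. Qed.

Lemma tangsq nu y : dotv nu nu = 1 ->
  dotv (tang nu y) (tang nu y) = dotv y y - dotv y nu ^+ 2.
Proof.
move=> h; rewrite /tang dotvBl !dotvBr !dotvZl !dotvZr h (dotvC _ _ nu y); ring.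
Qed.

Lemma enorm_le nu y (c : R) : enorm (tang nu y) <= c ->
  0 <= c /\ dotv (tang nu y) (tang nu y) <= c ^+ 2.
Proof.
rewrite /enorm => h.
have D0 := dotv_ge0 _ _ (tang nu y).
have s0 := sqrtr_ge0 (dotv (tang nu y) (tang nu y)).
have sq := sqr_sqrtr D0.
split; first exact: le_trans h.
rewrite -sq; rewrite ler_sqr ?nnegrE //; exact: le_trans h.
Qed.

Lemma enorm_eq nu y (c : R) : enorm (tang nu y) = c ->
  dotv (tang nu y) (tang nu y) = c ^+ 2.
Proof.
rewrite /enorm => h.
by rewrite -h sqr_sqrtr // dotv_ge0.
Qed.

Lemma coord_le y i : `|y 0 i| ^+ 2 <= dotv y y.
Proof.
rewrite /dotv (bigD1 i) //= real_normK ?num_real // expr2 lerDl.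
by apply: sumr_ge0 => j _; rewrite -expr2 sqr_ge0.
Qed.

Lemma contSqrt' (f : 'rV[R]_n -> R) : continuous f -> continuous (fun x => Num.sqrt (f x)).
Proof. by move=> cf x; exact: (continuous_comp (cf x) (@sqrt_continuous _ _)). Qed.

Lemma SigmaR_compact nu (Rr : R) : dotv nu nu = 1 -> compact (SigmaR nu Rr).
Proof.
move=> h; apply: bounded_closed_compact.
  apply: (@bnd _ (Rr ^+ 2 + 2)); first by rewrite addr_ge0 // sqr_ge0.
  move=> y [/andP [t1 t2] en] i.
  have [c0 D] := enorm_le _ _ _ en.
  rewrite tangsq // in D.
  have := coord_le y i.
  have := normr_ge0 (y 0 i).
  move: (`|y 0 i|) => a a0 ha.
  have tt : dotv y nu ^+ 2 <= 1 by nra.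
  nra.
set f1 := fun x : 'rV[R]_n => dotv x nu.
set f2 := fun x : 'rV[R]_n => enorm (tang nu x).
have c1 : continuous f1 by exact: dotv_cont.
have c2 : continuous f2.
  have -> : f2 = fun x => Num.sqrt (dotv x x - dotv x nu ^+ 2).
    by apply: funext => x; rewrite /f2 /enorm tangsq.
  apply: contSqrt'; apply: contD'; first exact: dotvv_cont.
  have cn : continuous (fun x => dotv x nu ^+ 2) by apply: contX2'; exact: dotv_cont.
  by move=> x; exact: (continuousN (cn x)).
have -> : SigmaR nu Rr = f1 @^-1` [set t | -1 <= t] `&` f1 @^-1` [set t | t <= 0]
   `&` f2 @^-1` [set t | t <= Rr].
  apply/seteqP; split => x /=.
    by move=> [/andP [a b] c].
  by move=> [[a b] c]; split => //; apply/andP.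
apply: closedI; first apply: closedI.
- by apply: (proj1 (continuous_closedP f1) c1); exact: closed_ge.
- by apply: (proj1 (continuous_closedP f1) c1); exact: closed_le.
- by apply: (proj1 (continuous_closedP f2) c2); exact: closed_le.
Qed.
End G.

Theorem corollary2p10 (R : realType) (n : nat) (lam Lam : R) :
  0 < lam -> lam < Lam ->
  exists C : R, 0 < C /\
    forall (nu : 'rV[R]_n) (Rr eps : R) (w : 'rV[R]_n -> R),
      dotv nu nu = 1 -> 0 < Rr -> 1 <= Rr -> 0 < eps ->
      {within SigmaR nu Rr, continuous w} ->
      visc_sub_Pplus lam Lam nu Rr w ->
      visc_super_Pminus lam Lam nu Rr w ->
      (forall x, SigmaR nu Rr x -> dotv x nu = -1 -> w x = 0) ->
      (forall x, SigmaR nu Rr x -> `|w x| <= Rr `^ (2 - eps)) ->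
      forall x, slab nu x -> enorm (tang nu x) <= 1 ->
        `|w x| <= C * Rr `^ (- eps).
Proof.
move=> l0 lL.
have L0 : 0 < Lam by apply: lt_trans lL.
set K := 2 + n%:R * Lam / lam.
have K2 : 2 <= K.
  rewrite /K lerDl; apply: divr_ge0; last exact: ltW.
  by apply: mulr_ge0; [exact: ler0n | exact: ltW].
have lK : lam * K = 2 * lam + n%:R * Lam.
  by rewrite /K; field; rewrite gt_eqF.
exists (4 + K); split; first lra.
move=> nu Rr eps w hnu R0 R1 e0 wc hsub hsup hD hb x xs xt.
set r := Rr `^ (- eps).
have r0 : 0 < r by rewrite /r powR_gt0.
set B := 2 * r.
have B0 : 0 < B by rewrite /B; lra.
have KB : 2 * B <= K * B by rewrite ler_pM2r.
have pw : Rr `^ (2 - eps) = Rr ^+ 2 * r.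
  rewrite powRD; last by rewrite (gt_eqF R0) implybT.
  by rewrite powR_mulrn // ltW.
set psi := Q R n nu (B / 2) (- (K * B) / 2) B (K * B / 2 + B).
set mpsi := Q R n nu (- (B / 2)) (K * B / 2) (- B) (- (K * B / 2 + B)).
have mpsiE y : mpsi y = - psi y by rewrite /mpsi /psi /Q; ring.
have psiE y : psi y = B / 2 * dotv y y - K * B / 2 * dotv y nu ^+ 2 +
    B * dotv y nu + K * B / 2 + B by rewrite /psi /Q; ring.
have psi_ge y : SigmaR nu Rr y -> B / 2 * dotv y y <= psi y.
  move=> [/andP [t1 t2] _]; rewrite psiE.
  have h1 : 0 <= 1 - dotv y nu ^+ 2 by nra.
  have h2 := mulr_ge0 (ltW (mulr_gt0 (lt_le_trans (ltr0Sn _ 1) K2) B0)) h1.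
  have h3 : 0 <= B * (1 + dotv y nu) by apply: mulr_ge0; lra.
  nra.
have psi_lat y : SigmaR nu Rr y -> enorm (tang nu y) = Rr -> Rr `^ (2 - eps) <= psi y.
  move=> Sy ey; apply: le_trans (psi_ge y Sy).
  have := enorm_eq _ _ _ _ _ ey; rewrite tangsq // => T.
  have T2 : Rr ^+ 2 <= dotv y y by rewrite -T lerBlDr lerDl sqr_ge0.
  rewrite pw /B; nra.
have psi_D y : SigmaR nu Rr y -> 0 <= psi y.
  move=> Sy; apply: le_trans (psi_ge y Sy).
  by apply: mulr_ge0; [lra | exact: dotv_ge0].
have Sx : SigmaR nu Rr x by split=> //; exact: le_trans xt R1.
have psi_x : psi x <= (4 + K) * r.
  move: xs => /andP [t1 t2].
  have [_ T] := enorm_le _ _ _ _ _ xt; rewrite tangsq // expr1n in T.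
  have h1 : 0 <= K * B * dotv x nu ^+ 2 by apply: mulr_ge0; [nra | exact: sqr_ge0].
  have h2 : B * dotv x nu <= 0 by nra.
  have h3 : B * dotv x x <= B * 2 by rewrite ler_pM2l //; nra.
  rewrite psiE /B; nra.
have S0 : SigmaR nu Rr !=set0.
  exists 0; split; first by rewrite /slab /= dotv0l lexx andbT lerN10.
  by rewrite /enorm tangsq // !dotv0l expr0n /= subrr sqrtr0 ltW.
have cS := SigmaR_compact _ _ nu Rr hnu.
have up : w x - psi x <= 0.
  have ct : {within SigmaR nu Rr, continuous (fun y => w y - psi y)}.
    apply: within_continuousB => //; apply: continuous_subspaceT.
    exact: (proj1 (C2Q _ _ _ _ _ _ _)).
  have [c cS' cmax] := EVT_max_rV S0 cS ct.
  apply: le_trans (cmax x _) _; first by rewrite inE.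
  move: cS'; rewrite inE => Sc; have Sc' := Sc.
  move: Sc' => [/andP[tc1 tc2] ec].
  have [tD|tD] := eqVneq (dotv c nu) (-1).
    by rewrite hD // subr_le0 psi_D.
  have [eR|eR] := eqVneq (enorm (tang nu c)) Rr.
    rewrite subr_le0; apply: le_trans (psi_lat c Sc eR).
    by apply: le_trans (hb c Sc); exact: ler_norm.
  exfalso.
  have elt : enorm (tang nu c) < Rr by rewrite lt_neqAle eR ec.
  have touch : touch_above (SigmaR nu Rr) w psi c.
    by exists 1 => // y Sy _; apply: cmax; rewrite inE.
  have [hi hn] := hsub psi c (C2Q _ _ _ _ _ _ _) touch.
  have Pneg : pucci_plus lam Lam (hessian psi c) < 0.
    rewrite /psi hessQ.
    apply: le_lt_trans (pplus_bound _ _ _ _ nu _ _ hnu _ _ l0 L0) _; try lra.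
    have e : lam * (K * B) = (2 * lam + n%:R * Lam) * B by rewrite mulrA lK.
    rewrite -mulr_natr; nra.
  have [t0|t0] := eqVneq (dotv c nu) 0.
    have := hn (conj t0 elt).
    have [_ ->] := Q_der _ _ nu (B / 2) (- (K * B) / 2) B (K * B / 2 + B) c nu.
    rewrite /Dq t0 hnu !mulr0 mul0r add0r mulr1.
    apply/negP; rewrite -ltNge lt_min; apply/andP; split => //; lra.
  have ti : -1 < dotv c nu < 0.
    by rewrite !lt_neqAle eq_sym tD t0 tc1 tc2.
  have := hi (conj ti elt); lra.
have lo : 0 <= w x - mpsi x.
  have ct : {within SigmaR nu Rr, continuous (fun y => w y - mpsi y)}.
    apply: within_continuousB => //; apply: continuous_subspaceT.
    exact: (proj1 (C2Q _ _ _ _ _ _ _)).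
  have [c cS' cmin] := EVT_min_rV S0 cS ct.
  apply: le_trans _ (cmin x _); last by rewrite inE.
  move: cS'; rewrite inE => Sc; have Sc' := Sc.
  move: Sc' => [/andP[tc1 tc2] ec].
  have [tD|tD] := eqVneq (dotv c nu) (-1).
    by rewrite hD // mpsiE sub0r opprK psi_D.
  have [eR|eR] := eqVneq (enorm (tang nu c)) Rr.
    have h := le_trans (hb c Sc) (psi_lat c Sc eR).
    move: h; rewrite ler_norml => /andP[h _]; rewrite mpsiE; lra.
  exfalso.
  have elt : enorm (tang nu c) < Rr by rewrite lt_neqAle eR ec.
  have touch : touch_below (SigmaR nu Rr) w mpsi c.
    by exists 1 => // y Sy _; apply: cmin; rewrite inE.
  have [hi hn] := hsup mpsi c (C2Q _ _ _ _ _ _ _) touch.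
  have Ppos : 0 < pucci_minus lam Lam (hessian mpsi c).
    rewrite /mpsi hessQ.
    apply: lt_le_trans _ (pminus_bound _ _ _ _ nu _ _ hnu _ _ l0 L0); try lra.
    have e : lam * (K * B) = (2 * lam + n%:R * Lam) * B by rewrite mulrA lK.
    rewrite -mulr_natr; nra.
  have [t0|t0] := eqVneq (dotv c nu) 0.
    have := hn (conj t0 elt).
    have [_ ->] := Q_der _ _ nu (- (B / 2)) (K * B / 2) (- B) (- (K * B / 2 + B)) c nu.
    rewrite /Dq t0 hnu !mulr0 mul0r add0r mulr1.
    rewrite le_max => /orP[]; lra.
  have ti : -1 < dotv c nu < 0.
    by rewrite !lt_neqAle eq_sym tD t0 tc1 tc2.
  have := hi (conj ti elt); lra.
rewrite mpsiE in lo.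
rewrite ler_norml; apply/andP; split; lra.
Qed.
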